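(* Equip $\mathbb{R}^k$ with the Euclidean norm and $\mathbb{R}$ with the absolute value. Then the maps $(0,\infty)^k\to\mathbb{R}$, $\lambda\mapsto g(\|Y-X\hat\beta^\lambda\|_2^2)$ and $\lambda\mapsto\|Y-X\hat\beta^\lambda\|_2^2$ are well defined (independent of the choice of minimizer $\hat\beta^\lambda$) and continuous.
   Context: $Y\in\mathbb{R}^n$, $X\in\mathbb{R}^{n\times p}$. Link function $g:\mathbb{R}\to[0,\infty)$ with $g(0)=0$, $g$ continuous and strictly increasing on $[0,\infty)$, continuously differentiable on $(0,\infty)$ with strictly positive and non-increasing derivative, and such that $\alpha\mapsto g(\|\alpha\|_2^2)$ is strictly convex on $\mathbb{R}^n$. $M_1,\dots,M_k\in\mathbb{R}^{p\times p}$ with $\bigcap_{j}\mathrm{Ker}(M_j)=\{0\}$, $q_j\ge1$, $\|\cdot\|_{q_j}$ the $\ell_{q_j}$-norm on $\mathbb{R}^p$. For $\lambda\in(0,\infty)^k$, $\hat\beta^\lambda$ denotes any element of $\arg\min_{\beta\in\mathbb{R}^p}\{g(\|Y-X\beta\|_2^2)+\sum_{j=1}^k\lambda_j\|M_j\beta\|_{q_j}\}$. *)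

(* Defs.v *)
(* classical real numbers. Vectors of R^m are functions nat -> R,
   only the indices < m are meaningful; matrices are nat -> nat -> R. *)
From Stdlib Require Import Reals.
Open Scope R_scope.

Fixpoint rsum (f : nat -> R) (m : nat) : R :=
  match m with
  | O => 0
  | S m' => rsum f m' + f m'
  end.

Definition sqnorm (m : nat) (v : nat -> R) : R := rsum (fun i => v i ^ 2) m.

Definition edist (m : nat) (u v : nat -> R) : R := sqrt (sqnorm m (fun i => u i - v i)).

Definition matvec (c : nat) (A : nat -> nat -> R) (v : nat -> R) : nat -> R :=
  fun i => rsum (fun j => A i j * v j) c.

(* x^q for x >= 0 and q > 0, with the convention 0^q = 0 *)
Definition rpow (x q : R) : R :=
  if Rle_dec x 0 then 0 else Rpower x q.

Definition lqnorm (m : nat) (q : R) (v : nat -> R) : R :=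
  rpow (rsum (fun i => rpow (Rabs (v i)) q) m) (/ q).

Definition objective (n p k : nat) (g : R -> R) (Y : nat -> R)
  (X : nat -> nat -> R) (M : nat -> nat -> nat -> R) (q : nat -> R)
  (lam : nat -> R) (b : nat -> R) : R :=
  g (sqnorm n (fun i => Y i - matvec p X b i))
  + rsum (fun j => lam j * lqnorm p (q j) (matvec p (M j) b)) k.

Definition is_minimizer (n p k : nat) (g : R -> R) (Y : nat -> R)
  (X : nat -> nat -> R) (M : nat -> nat -> nat -> R) (q : nat -> R)
  (lam : nat -> R) (b : nat -> R) : Prop :=
  forall b' : nat -> R, objective n p k g Y X M q lam b <= objective n p k g Y X M q lam b'.

Definition pos_vec (k : nat) (lam : nat -> R) : Prop := forall j, (j < k)%nat -> 0 < lam j.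

Definition link_function (n : nat) (g : R -> R) : Prop :=
  g 0 = 0
  /\ (forall x, 0 <= x -> forall eps, 0 < eps -> exists delta, 0 < delta /\
        forall y, 0 <= y -> Rabs (y - x) < delta -> Rabs (g y - g x) < eps)
  /\ (forall x y, 0 <= x -> x < y -> g x < g y)
  /\ (exists g' : R -> R,
        (forall x, 0 < x -> derivable_pt_lim g x (g' x))
        /\ (forall x, 0 < x -> continuity_pt g' x)
        /\ (forall x, 0 < x -> 0 < g' x)
        /\ (forall x y, 0 < x -> x <= y -> g' y <= g' x))
  /\ (forall (a b : nat -> R) (t : R),
        (exists i, (i < n)%nat /\ a i <> b i) -> 0 < t < 1 ->
        g (sqnorm n (fun i => t * a i + (1 - t) * b i))
        < t * g (sqnorm n a) + (1 - t) * g (sqnorm n b)).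

(* Main.v *)
Require Import Defs.
From Stdlib Require Import Reals Lra Lia Classical FunctionalExtensionality.
From HB Require structures.
From mathcomp Require all_boot all_order all_algebra all_classical all_reals all_analysis Rstruct Rstruct_topology.
Set Bullet Behavior "Strict Subproofs".
Open Scope R_scope.

Lemma rsum_ext (f g : nat -> R) m :
  (forall i, (i < m)%nat -> f i = g i) -> rsum f m = rsum g m.
Proof.
  induction m as [|m IH]; intros H; simpl; [reflexivity|].
  rewrite IH by (intros; apply H; lia). rewrite (H m) by lia. reflexivity.
Qed.

Lemma rsum_plus (f g : nat -> R) m :
  rsum (fun i => f i + g i) m = rsum f m + rsum g m.
Proof. induction m as [|m IH]; simpl; [lra|]. rewrite IH. ring. Qed.

Lemma rsum_scal (c : R) (f : nat -> R) m :
  rsum (fun i => c * f i) m = c * rsum f m.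
Proof. induction m as [|m IH]; simpl; [ring|]. rewrite IH. ring. Qed.

Lemma rsum_le (f g : nat -> R) m :
  (forall i, (i < m)%nat -> f i <= g i) -> rsum f m <= rsum g m.
Proof.
  induction m as [|m IH]; intros H; simpl; [lra|].
  assert (H1 := IH (fun i Hi => H i ltac:(lia))). assert (H2 := H m ltac:(lia)). lra.
Qed.

Lemma rsum_nonneg (f : nat -> R) m :
  (forall i, (i < m)%nat -> 0 <= f i) -> 0 <= rsum f m.
Proof.
  intros H. replace 0 with (rsum (fun _ => 0) m).
  - apply rsum_le; auto.
  - induction m; simpl; [reflexivity|]. rewrite IHm by (intros; apply H; lia). ring.
Qed.

Lemma rsum_term (f : nat -> R) m j :
  (forall i, (i < m)%nat -> 0 <= f i) -> (j < m)%nat -> f j <= rsum f m.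
Proof.
  induction m as [|m IH]; intros H Hj; [lia|]. simpl.
  destruct (Nat.eq_dec j m) as [->|Hne].
  - assert (0 <= rsum f m) by (apply rsum_nonneg; intros; apply H; lia). lra.
  - assert (f j <= rsum f m) by (apply IH; [intros; apply H; lia| lia]).
    assert (0 <= f m) by (apply H; lia). lra.
Qed.

Lemma rsum_const (c : R) m : rsum (fun _ => c) m = INR m * c.
Proof.
  induction m as [|m IH]; [simpl; ring|].
  change (rsum (fun _ => c) (S m)) with (rsum (fun _ => c) m + c). rewrite IH, S_INR. ring.
Qed.

Lemma rpow_le0 x q : x <= 0 -> rpow x q = 0.
Proof. intros H. unfold rpow. destruct (Rle_dec x 0); [reflexivity| lra]. Qed.

Lemma rpow_pos x q : 0 < x -> rpow x q = Rpower x q.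
Proof. intros H. unfold rpow. destruct (Rle_dec x 0); [lra| reflexivity]. Qed.

Lemma Rpower_gt0 x q : 0 < Rpower x q.
Proof. unfold Rpower. apply exp_pos. Qed.

Lemma rpow_nonneg x q : 0 <= rpow x q.
Proof.
  unfold rpow. destruct (Rle_dec x 0); [lra|]. left; apply Rpower_gt0.
Qed.

Lemma rpow_gt0 x q : 0 < x -> 0 < rpow x q.
Proof. intros H. rewrite rpow_pos by exact H. apply Rpower_gt0. Qed.

Lemma rpow_mult x y q : 0 <= x -> 0 <= y -> rpow (x * y) q = rpow x q * rpow y q.
Proof.
  intros Hx Hy. destruct (Req_dec x 0) as [->|Hx0].
  { rewrite Rmult_0_l, (rpow_le0 0) by lra. ring. }
  destruct (Req_dec y 0) as [->|Hy0].
  { rewrite Rmult_0_r, (rpow_le0 0) by lra. ring. }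
  assert (0 < x) by lra. assert (0 < y) by lra.
  rewrite !rpow_pos by (try apply Rmult_lt_0_compat; lra).
  symmetry; apply Rpower_mult_distr; lra.
Qed.

Lemma rpow_rpow x a b : 0 <= x -> rpow (rpow x a) b = rpow x (a * b).
Proof.
  intros Hx. destruct (Req_dec x 0) as [->|Hx0].
  { repeat rewrite (rpow_le0 0) by lra. reflexivity. }
  assert (0 < x) by lra.
  rewrite (rpow_pos (rpow x a)) by (apply rpow_gt0; lra).
  rewrite !(rpow_pos x) by lra. apply Rpower_mult.
Qed.

Lemma rpow_one x : 0 <= x -> rpow x 1 = x.
Proof.
  intros Hx. destruct (Req_dec x 0) as [->|Hx0]. { apply rpow_le0; lra. }
  rewrite rpow_pos by lra. apply Rpower_1; lra.
Qed.

Lemma rpow_inv_l x q : 0 <= x -> 0 < q -> rpow (rpow x q) (/ q) = x.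
Proof.
  intros Hx Hq. rewrite rpow_rpow by exact Hx. rewrite Rinv_r by lra. apply rpow_one; exact Hx.
Qed.

Lemma rpow_inv_r x q : 0 <= x -> 0 < q -> rpow (rpow x (/ q)) q = x.
Proof.
  intros Hx Hq. rewrite rpow_rpow by exact Hx. rewrite Rinv_l by lra. apply rpow_one; exact Hx.
Qed.

Lemma rpow_le x y q : 0 < q -> 0 <= x <= y -> rpow x q <= rpow y q.
Proof.
  intros Hq [Hx Hxy]. destruct (Req_dec x 0) as [->|Hx0].
  { rewrite (rpow_le0 0) by lra. apply rpow_nonneg. }
  rewrite !rpow_pos by lra. apply Rle_Rpower_l; lra.
Qed.

Lemma rpow_lt x y q : 0 < q -> 0 <= x < y -> rpow x q < rpow y q.
Proof.
  intros Hq [Hx Hxy]. destruct (Req_dec x 0) as [->|Hx0].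
  { rewrite (rpow_le0 0) by lra. apply rpow_gt0; lra. }
  rewrite !rpow_pos by lra. apply Rlt_Rpower_l; lra.
Qed.

Lemma rpow_eq0 x q : rpow x q = 0 -> x <= 0.
Proof.
  intros H. destruct (Rle_dec x 0) as [h|h]; [exact h|].
  assert (0 < rpow x q) by (apply rpow_gt0; lra). lra.
Qed.

Lemma exp_convex s X Y : 0 <= s <= 1 ->
  exp (s * X + (1 - s) * Y) <= s * exp X + (1 - s) * exp Y.
Proof.
  intros Hs. set (m := s * X + (1 - s) * Y).
  set (E := exp m). assert (HE : 0 < E) by apply exp_pos.
  assert (h1 : E * (1 + (X - m)) <= exp X).
  { replace (exp X) with (E * exp (X - m)) by (unfold E; rewrite <- exp_plus; f_equal; ring).
    apply Rmult_le_compat_l; [lra| apply exp_ineq1_le]. }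
  assert (h2 : E * (1 + (Y - m)) <= exp Y).
  { replace (exp Y) with (E * exp (Y - m)) by (unfold E; rewrite <- exp_plus; f_equal; ring).
    apply Rmult_le_compat_l; [lra| apply exp_ineq1_le]. }
  assert (h3 : s * (E * (1 + (X - m))) <= s * exp X) by (apply Rmult_le_compat_l; lra).
  assert (h4 : (1 - s) * (E * (1 + (Y - m))) <= (1 - s) * exp Y) by (apply Rmult_le_compat_l; lra).
  assert (h5 : s * (E * (1 + (X - m))) + (1 - s) * (E * (1 + (Y - m))) = E) by (unfold m; ring).
  lra.
Qed.

Lemma bernoulli q r : 1 <= q -> 0 < r -> 1 + q * (r - 1) <= Rpower r q.
Proof.
  intros Hq Hr. assert (Hs : 0 <= / q <= 1).
  { split. { left; apply Rinv_0_lt_compat; lra. }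
    rewrite <- Rinv_1. apply Rinv_le_contravar; lra. }
  assert (H := exp_convex (/ q) (q * ln r) 0 Hs).
  replace (/ q * (q * ln r) + (1 - / q) * 0) with (ln r) in H by (field; lra).
  rewrite exp_ln, exp_0 in H by exact Hr.
  assert (Hq' : 0 < q) by lra.
  unfold Rpower. 
  apply Rmult_le_compat_l with (r := q) in H; [|lra].
  replace (q * (/ q * exp (q * ln r) + (1 - / q) * 1)) with (exp (q * ln r) + q - 1) in H by (field; lra).
  replace (ln r * q) with (q * ln r) by ring. nra.
Qed.

Lemma rpow_tangent q z w : 1 <= q -> 0 < z -> 0 <= w ->
  rpow z q + q * (rpow z q / z) * (w - z) <= rpow w q.
Proof.
  intros Hq Hz Hw. assert (HZ := rpow_gt0 z q Hz).
  destruct (Req_dec w 0) as [->|Hw0].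
  { rewrite (rpow_le0 0) by lra.
    replace (rpow z q + q * (rpow z q / z) * (0 - z)) with ((1 - q) * rpow z q) by (field; lra).
    nra. }
  assert (Hw' : 0 < w) by lra.
  assert (Hb := bernoulli q (w / z) Hq ltac:(apply Rdiv_lt_0_compat; lra)).
  replace (rpow w q) with (rpow z q * rpow (w / z) q).
  2:{ rewrite <- rpow_mult by (try apply Rlt_le, Rdiv_lt_0_compat; lra). f_equal. field. lra. }
  rewrite (rpow_pos (w / z)) by (apply Rdiv_lt_0_compat; lra).
  apply Rmult_le_compat_l with (r := rpow z q) in Hb; [|lra].
  replace (rpow z q * (1 + q * (w / z - 1))) with (rpow z q + q * (rpow z q / z) * (w - z)) in Hb by (field; lra).
  exact Hb.
Qed.

Lemma rpow_convex q x y t : 1 <= q -> 0 <= x -> 0 <= y -> 0 < t < 1 ->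
  rpow (t * x + (1 - t) * y) q <= t * rpow x q + (1 - t) * rpow y q.
Proof.
  intros Hq Hx Hy Ht. set (z := t * x + (1 - t) * y).
  assert (Hrx := rpow_nonneg x q). assert (Hry := rpow_nonneg y q).
  destruct (Rle_dec z 0) as [Hz|Hz].
  { rewrite rpow_le0 by exact Hz. nra. }
  assert (Hz' : 0 < z) by lra.
  assert (h1 := rpow_tangent q z x Hq Hz' Hx).
  assert (h2 := rpow_tangent q z y Hq Hz' Hy).
  set (K := q * (rpow z q / z)) in *.
  assert (h3 : t * (rpow z q + K * (x - z)) <= t * rpow x q) by (apply Rmult_le_compat_l; lra).
  assert (h4 : (1 - t) * (rpow z q + K * (y - z)) <= (1 - t) * rpow y q) by (apply Rmult_le_compat_l; lra).
  assert (h5 : t * (rpow z q + K * (x - z)) + (1 - t) * (rpow z q + K * (y - z)) = rpow z q) by (unfold z; ring).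
  lra.
Qed.

Lemma cpt_eps f x : continuity_pt f x ->
  forall e, 0 < e -> exists a, 0 < a /\ forall y, Rabs (y - x) < a -> Rabs (f y - f x) < e.
Proof.
  intros H e He. destruct (H e He) as [a [Ha Hf]]. exists a; split; [exact Ha|].
  intros y Hy. destruct (Req_dec y x) as [->|Hne].
  { unfold Rminus; rewrite Rplus_opp_r, Rabs_R0; exact He. }
  apply (Hf y). split; [split; [exact I| congruence]| exact Hy].
Qed.

Lemma rpow_cont q x : 0 < q ->
  forall e, 0 < e -> exists a, 0 < a /\ forall y, Rabs (y - x) < a -> Rabs (rpow y q - rpow x q) < e.
Proof.
  intros Hq e He.
  destruct (Rtotal_order x 0) as [Hx|[Hx|Hx]].
  - exists (- x); split; [lra|]. intros y Hy.
    assert (y < 0) by (apply Rabs_def2 in Hy; lra).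
    rewrite (rpow_le0 y), (rpow_le0 x) by lra. rewrite Rminus_diag, Rabs_R0; exact He.
  - subst x. exists (rpow e (/ q)); split; [apply rpow_gt0; exact He|].
    intros y Hy. rewrite (rpow_le0 0) by lra. rewrite Rminus_0_r in *.
    destruct (Rle_dec y 0) as [Hy0|Hy0].
    + rewrite rpow_le0 by exact Hy0. rewrite Rabs_R0; exact He.
    + rewrite Rabs_right in Hy by lra. rewrite Rabs_right by (apply Rle_ge, rpow_nonneg).
      rewrite <- (rpow_inv_r e q) by lra. apply rpow_lt; lra.
  - assert (Hc : continuity_pt (fun y => Rpower y q) x).
    { apply derivable_continuous_pt. exact (exist _ _ (derivable_pt_lim_power x q Hx)). }
    destruct (cpt_eps _ _ Hc e He) as [a [Ha Hf]].
    exists (Rmin a x); split; [apply Rmin_glb_lt; lra|]. intros y Hy.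
    assert (Hy1 : Rabs (y - x) < a) by (eapply Rlt_le_trans; [exact Hy| apply Rmin_l]).
    assert (Hy2 : Rabs (y - x) < x) by (eapply Rlt_le_trans; [exact Hy| apply Rmin_r]).
    assert (0 < y) by (apply Rabs_def2 in Hy2; lra).
    rewrite !rpow_pos by lra. apply Hf; exact Hy1.
Qed.

Definition cont (p : nat) (F : (nat -> R) -> R) (b : nat -> R) : Prop :=
  forall eps, 0 < eps -> exists d, 0 < d /\ forall b',
    (forall i, (i < p)%nat -> Rabs (b' i - b i) < d) -> Rabs (F b' - F b) < eps.

Section Cont.
Variable p : nat.
Variable b : nat -> R.

Lemma cont_const c : cont p (fun _ => c) b.
Proof. intros e He. exists 1; split; [lra|]. intros. rewrite Rminus_diag, Rabs_R0; exact He. Qed.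

Lemma cont_coord i : (i < p)%nat -> cont p (fun b => b i) b.
Proof. intros Hi e He. exists e; split; [exact He|]. intros b' H; apply H; exact Hi. Qed.

Lemma cont_ext F G : (forall b, F b = G b) -> cont p F b -> cont p G b.
Proof.
  intros E H e He. destruct (H e He) as [d [Hd Hb]]. exists d; split; [exact Hd|].
  intros b' Hb'. rewrite <- !E. apply Hb; exact Hb'.
Qed.

Lemma cont_plus F G : cont p F b -> cont p G b -> cont p (fun b => F b + G b) b.
Proof.
  intros HF HG e He.
  destruct (HF (e/2) ltac:(lra)) as [d1 [Hd1 H1]].
  destruct (HG (e/2) ltac:(lra)) as [d2 [Hd2 H2]].
  exists (Rmin d1 d2); split; [apply Rmin_glb_lt; lra|]. intros b' Hb'.
  assert (A1 := H1 b' (fun i Hi => Rlt_le_trans _ _ _ (Hb' i Hi) (Rmin_l _ _))).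
  assert (A2 := H2 b' (fun i Hi => Rlt_le_trans _ _ _ (Hb' i Hi) (Rmin_r _ _))).
  replace (F b' + G b' - (F b + G b)) with ((F b' - F b) + (G b' - G b)) by ring.
  eapply Rle_lt_trans; [apply Rabs_triang|]. lra.
Qed.

Lemma cont_comp (phi : R -> R) (D : R -> Prop) F :
  (forall b', D (F b')) -> cont p F b ->
  (forall e, 0 < e -> exists a, 0 < a /\ forall y, D y -> Rabs (y - F b) < a -> Rabs (phi y - phi (F b)) < e) ->
  cont p (fun b => phi (F b)) b.
Proof.
  intros HD HF Hphi e He. destruct (Hphi e He) as [a [Ha Hp]].
  destruct (HF a Ha) as [d [Hd Hb]]. exists d; split; [exact Hd|].
  intros b' Hb'. apply Hp; [apply HD| apply Hb; exact Hb'].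
Qed.

Lemma cont_comp_glob (phi : R -> R) F : cont p F b ->
  (forall e, 0 < e -> exists a, 0 < a /\ forall y, Rabs (y - F b) < a -> Rabs (phi y - phi (F b)) < e) ->
  cont p (fun b => phi (F b)) b.
Proof.
  intros HF Hphi. apply (cont_comp phi (fun _ => True)); [intros; exact I| exact HF|].
  intros e He. destruct (Hphi e He) as [a [Ha Hp]]. exists a; split; [exact Ha|]. intros; apply Hp; assumption.
Qed.

Lemma cont_comp_pt (phi : R -> R) F : cont p F b -> continuity_pt phi (F b) ->
  cont p (fun b => phi (F b)) b.
Proof. intros HF Hc. apply cont_comp_glob; [exact HF|]. apply cpt_eps; exact Hc. Qed.

Lemma cont_scal c F : cont p F b -> cont p (fun b => c * F b) b.
Proof.
  intros HF e He. assert (Hc : 0 < Rabs c + 1) by (generalize (Rabs_pos c); lra).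
  destruct (HF (e / (Rabs c + 1))) as [d [Hd H]]; [apply Rdiv_lt_0_compat; lra|].
  exists d; split; [exact Hd|]. intros b' Hb'. specialize (H b' Hb').
  replace (c * F b' - c * F b) with (c * (F b' - F b)) by ring. rewrite Rabs_mult.
  apply Rmult_lt_compat_l with (r := Rabs c + 1) in H; [|lra].
  replace ((Rabs c + 1) * (e / (Rabs c + 1))) with e in H by (field; lra).
  assert (0 <= Rabs (F b' - F b)) by apply Rabs_pos. nra.
Qed.

Lemma cont_sq F : cont p F b -> cont p (fun b => F b ^ 2) b.
Proof.
  intros HF. apply (cont_comp_pt (fun y => y ^ 2)); [exact HF|].
  apply derivable_continuous_pt. apply derivable_pt_pow.
Qed.

Lemma cont_abs F : cont p F b -> cont p (fun b => Rabs (F b)) b.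
Proof.
  intros HF. apply (cont_comp_pt Rabs); [exact HF|]. apply Rcontinuity_abs.
Qed.

Lemma cont_rpow q F : 0 < q -> cont p F b -> cont p (fun b => rpow (F b) q) b.
Proof. intros Hq HF. apply (cont_comp_glob (fun y => rpow y q)); [exact HF|]. apply rpow_cont; exact Hq. Qed.

Lemma cont_rsum (F : nat -> (nat -> R) -> R) m :
  (forall j, (j < m)%nat -> cont p (F j) b) -> cont p (fun b => rsum (fun j => F j b) m) b.
Proof.
  induction m as [|m IH]; intros H.
  - simpl. apply cont_const.
  - simpl. apply (cont_plus (fun b => rsum (fun j => F j b) m) (F m)).
    + apply IH; intros; apply H; lia.
    + apply H; lia.
Qed.

Lemma cont_minus F G : cont p F b -> cont p G b -> cont p (fun b => F b - G b) b.
Proof.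
  intros HF HG. apply (cont_ext (fun b => F b + (-1) * G b)); [intros; ring|].
  apply cont_plus; [exact HF| apply cont_scal; exact HG].
Qed.

Lemma Rmax_formula x y : Rmax x y = (x + y + Rabs (x - y)) / 2.
Proof.
  unfold Rmax. destruct (Rle_dec x y).
  - rewrite Rabs_left1 by lra. field.
  - rewrite Rabs_right by lra. field.
Qed.

Lemma cont_max F G : cont p F b -> cont p G b -> cont p (fun b => Rmax (F b) (G b)) b.
Proof.
  intros HF HG. apply (cont_ext (fun b => / 2 * (F b + G b + Rabs (F b - G b)))).
  { intros; rewrite Rmax_formula; field. }
  apply cont_scal. apply cont_plus; [apply cont_plus; assumption|].
  apply cont_abs, cont_minus; assumption.
Qed.

Lemma cont_matvec A : (forall i, (i < p)%nat -> True) -> forall i, cont p (fun b => matvec p A b i) b.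
Proof.
  intros _ i. unfold matvec. apply (cont_rsum (fun j b => A i j * b j)).
  intros j Hj. apply cont_scal, cont_coord; exact Hj.
Qed.

End Cont.

Definition dep_p (p : nat) (F : (nat -> R) -> R) : Prop :=
  forall b b', (forall i, (i < p)%nat -> b i = b' i) -> F b = F b'.
Definition box_min_concl (p : nat) (B : R) (F : (nat -> R) -> R) : Prop :=
  exists c, (forall i, (i < p)%nat -> Rabs (c i) <= B) /\
   (forall b, (forall i, (i < p)%nat -> Rabs (b i) <= B) -> F c <= F b).

Module MC.
Import structures.
Import all_boot all_order all_algebra all_classical all_reals all_analysis.
Import Rstruct Rstruct_topology.
Import Order.TTheory GRing.Theory Num.Theory.
Local Open Scope classical_set_scope.
Local Open Scope ring_scope.

Definition tov (p : nat) (v : 'rV[R]_p) : nat -> R :=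
  fun i => oapp (fun j => v ord0 j) 0%R (insub i : option 'I_p).

Arguments tov {p}.
Lemma tovE p (v : 'rV[R]_p) (j : 'I_p) : tov v (nat_of_ord j) = v ord0 j.
Proof. by rewrite /tov valK. Qed.

Lemma tovE' p (v : 'rV[R]_p) i (Hi : (i < p)%N) : tov v i = v ord0 (Ordinal Hi).
Proof. by rewrite -tovE. Qed.
Arguments tovE' {p} v {i} Hi.

Lemma box_min p B F : Rle 0 B -> (forall b, cont p F b) -> dep_p p F -> box_min_concl p B F.
Proof.
move=> B0 Hc Hdep.
pose A := [set v : 'rV[R]_p | forall j, `[-B, B]%classic (v ord0 j)].
have cA : compact A.
  by apply: (@rV_compact _ _ (fun=> `[-B, B]%classic)) => _; exact: segment_compact.
have B0' : (0 <= B)%R by apply/RleP.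
have A0 : A !=set0.
  exists 0 => j /=; rewrite mxE in_itv /= oppr_le0 B0' //.
have cf : {within A, continuous (fun v => F (tov v))}.
  apply: continuous_subspaceT => v.
  rewrite /continuous_at; apply/(@cvgrPdist_lt R R^o _ (nbhs v) (nbhs_filter v)) => e /RltP e0.
  have [d [d0 Hd]] := Hc (tov v) e e0.
  apply/nbhs_ballP; exists d => /=; first exact/RltP.
  move=> w [_ Bw].
  suff H : (Rabs (F (tov w) - F (tov v)) < e)%coqR.
    by rewrite -RabsE; apply/RltP; rewrite Rabs_minus_sym; exact: H.
  apply: Hd => i /ssrnat.ltP Hi.
  rewrite !(tovE' _ Hi) RabsE; apply/RltP.
  have := Bw ord0 (Ordinal Hi); rewrite /ball /= => H.
  by rewrite distrC.
have [c cA' Hmin] := EVT_min_rV A0 cA cf.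
have inA : forall b : nat -> R, (forall i, (i < p)%coq_nat -> Rle (Rabs (b i)) B) ->
   A (\row_(j < p) b j).
  move=> b Hb j /=; rewrite mxE in_itv /=.
  have := Hb j (ssrnat.ltP (ltn_ord j)); rewrite RabsE => /RleP; rewrite ler_norml => /andP[-> ->] //.
exists (tov c); split.
  move=> i Hi; rewrite (tovE' _ (introT ssrnat.ltP Hi)) RabsE; apply/RleP.
  move: cA'; rewrite inE => /(_ (Ordinal (introT ssrnat.ltP Hi))).
  by rewrite /= in_itv /= => /andP[h1 h2]; rewrite ler_norml h1 h2.
move=> b Hb.
have -> : F b = F (tov (\row_(j < p) b j)).
  apply: Hdep => i Hi; rewrite (tovE' _ (introT ssrnat.ltP Hi)) mxE //.
apply/RleP; apply: Hmin; rewrite inE; exact: inA.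
Qed.
End MC.

Definition Sq (p : nat) (q : R) (v : nat -> R) : R := rsum (fun i => rpow (Rabs (v i)) q) p.

Lemma lq_Sq p q v : lqnorm p q v = rpow (Sq p q v) (/ q).
Proof. reflexivity. Qed.

Lemma Sq_nonneg p q v : 0 <= Sq p q v.
Proof. apply rsum_nonneg; intros; apply rpow_nonneg. Qed.

Lemma lq_nonneg p q v : 0 <= lqnorm p q v.
Proof. apply rpow_nonneg. Qed.

Lemma lq_ext p q u v : (forall i, (i < p)%nat -> u i = v i) -> lqnorm p q u = lqnorm p q v.
Proof.
  intros H. unfold lqnorm. f_equal. apply rsum_ext. intros i Hi; rewrite H by exact Hi; reflexivity.
Qed.

Lemma lq_zero p q v : 0 < q -> (forall i, (i < p)%nat -> v i = 0) -> lqnorm p q v = 0.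
Proof.
  intros Hq H. unfold lqnorm.
  rewrite (rsum_ext _ (fun _ => 0)).
  2:{ intros i Hi. rewrite H, Rabs_R0 by exact Hi. apply rpow_le0; lra. }
  rewrite rsum_const, Rmult_0_r. apply rpow_le0; lra.
Qed.

Lemma lq_zero_inv p q v : lqnorm p q v = 0 -> forall i, (i < p)%nat -> v i = 0.
Proof.
  intros H i Hi. apply rpow_eq0 in H.
  assert (H1 : rpow (Rabs (v i)) q <= rsum (fun i => rpow (Rabs (v i)) q) p).
  { apply (rsum_term (fun i => rpow (Rabs (v i)) q)); [intros; apply rpow_nonneg| exact Hi]. }
  assert (H2 : rpow (Rabs (v i)) q = 0) by (generalize (rpow_nonneg (Rabs (v i)) q); lra).
  apply rpow_eq0 in H2. generalize (Rabs_pos (v i)); intros.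
  destruct (Req_dec (v i) 0); [assumption|]. assert (0 < Rabs (v i)) by (apply Rabs_pos_lt; assumption). lra.
Qed.

Lemma lq_homog p q v s : 0 < q -> 0 <= s -> lqnorm p q (fun i => s * v i) = s * lqnorm p q v.
Proof.
  intros Hq Hs. unfold lqnorm.
  rewrite (rsum_ext _ (fun i => rpow s q * rpow (Rabs (v i)) q)).
  2:{ intros i _. rewrite Rabs_mult, (Rabs_right s) by lra. apply rpow_mult; [lra| apply Rabs_pos]. }
  rewrite rsum_scal. rewrite rpow_mult; [| apply rpow_nonneg| apply rsum_nonneg; intros; apply rpow_nonneg].
  rewrite rpow_inv_l by lra. reflexivity.
Qed.

Lemma rpow_1_l q : rpow 1 q = 1.
Proof. rewrite rpow_pos by lra. unfold Rpower. rewrite ln_1, Rmult_0_r. apply exp_0. Qed.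

Lemma rpow_Rinv x q : 0 < x -> rpow (/ x) q = / rpow x q.
Proof.
  intros Hx. assert (Hr := rpow_gt0 x q Hx).
  assert (E : rpow x q * rpow (/ x) q = 1).
  { rewrite <- rpow_mult by (try (left; apply Rinv_0_lt_compat); lra).
    rewrite Rinv_r by lra. apply rpow_1_l. }
  field_simplify_eq; [| lra]. rewrite Rmult_comm; exact E.
Qed.

Lemma lq_mid p q u v w : 1 <= q ->
  (forall i, (i < p)%nat -> Rabs (w i) <= (Rabs (u i) + Rabs (v i)) / 2) ->
  lqnorm p q w <= (lqnorm p q u + lqnorm p q v) / 2.
Proof.
  intros Hq Hw. assert (Hq0 : 0 < q) by lra.
  set (a := lqnorm p q u). set (b := lqnorm p q v).
  assert (Ha : 0 <= a) by apply lq_nonneg. assert (Hb : 0 <= b) by apply lq_nonneg.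
  assert (Sua : Sq p q u = rpow a q) by (unfold a; rewrite lq_Sq, rpow_inv_r; [reflexivity| apply Sq_nonneg| exact Hq0]).
  assert (Svb : Sq p q v = rpow b q) by (unfold b; rewrite lq_Sq, rpow_inv_r; [reflexivity| apply Sq_nonneg| exact Hq0]).
  cut (forall eps, 0 < eps -> lqnorm p q w <= (a + b) / 2 + eps).
  { intros H. destruct (Rle_dec (lqnorm p q w) ((a + b) / 2)) as [h|h]; [exact h|].
    specialize (H ((lqnorm p q w - (a + b) / 2) / 2) ltac:(lra)). lra. }
  intros eps Heps.
  set (a' := a + eps). set (b' := b + eps). set (A := (a' + b') / 2).
  assert (Ha' : 0 < a') by (unfold a'; lra). assert (Hb' : 0 < b') by (unfold b'; lra).
  assert (HA : 0 < A) by (unfold A; lra).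
  set (mu := a' / (2 * A)).
  assert (Hmu : 0 < mu < 1).
  { unfold mu. split; [apply Rdiv_lt_0_compat; lra|].
    apply (Rmult_lt_reg_r (2 * A)); [lra|]. unfold Rdiv. rewrite Rmult_assoc, Rinv_l, Rmult_1_r by lra.
    unfold A; lra. }
  set (ia := / rpow a' q). set (ib := / rpow b' q).
  assert (Hia : 0 < ia) by (apply Rinv_0_lt_compat, rpow_gt0; exact Ha').
  assert (Hib : 0 < ib) by (apply Rinv_0_lt_compat, rpow_gt0; exact Hb').
  set (RA := rpow A q). assert (HRA : 0 < RA) by (apply rpow_gt0; exact HA).
  assert (Hterm : forall i, (i < p)%nat -> rpow (Rabs (w i)) q <=
     (RA * mu * ia) * rpow (Rabs (u i)) q + (RA * (1 - mu) * ib) * rpow (Rabs (v i)) q).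
  { intros i Hi. set (x := Rabs (u i) * / a'). set (y := Rabs (v i) * / b').
    assert (Hx : 0 <= x) by (unfold x; apply Rmult_le_pos; [apply Rabs_pos| left; apply Rinv_0_lt_compat; lra]).
    assert (Hy : 0 <= y) by (unfold y; apply Rmult_le_pos; [apply Rabs_pos| left; apply Rinv_0_lt_compat; lra]).
    assert (E : (Rabs (u i) + Rabs (v i)) / 2 = A * (mu * x + (1 - mu) * y)).
    { unfold x, y, mu, A. field. lra. }
    apply Rle_trans with (rpow ((Rabs (u i) + Rabs (v i)) / 2) q).
    { apply rpow_le; [exact Hq0|]. split; [apply Rabs_pos| apply Hw; exact Hi]. }
    rewrite E, rpow_mult by (try lra; nra).
    assert (Hc := rpow_convex q x y mu Hq Hx Hy Hmu).
    unfold x, y in Hc. rewrite !rpow_mult in Hc by (try apply Rabs_pos; left; apply Rinv_0_lt_compat; lra).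
    rewrite !rpow_Rinv in Hc by lra. fold ia ib in Hc. fold RA.
    apply Rmult_le_compat_l with (r := RA) in Hc; [|lra].
    eapply Rle_trans; [exact Hc|]. right; ring. }
  assert (HS : Sq p q w <= RA).
  { unfold Sq. eapply Rle_trans; [apply rsum_le; exact Hterm|].
    rewrite rsum_plus, !rsum_scal. fold (Sq p q u) (Sq p q v). rewrite Sua, Svb.
    assert (h1 : rpow a q * ia <= 1).
    { unfold ia. apply Rmult_le_reg_r with (rpow a' q); [apply rpow_gt0; lra|].
      rewrite Rmult_assoc, Rinv_l by (apply Rgt_not_eq, rpow_gt0; lra). rewrite ?Rmult_1_l, ?Rmult_1_r.
      apply rpow_le; [lra| unfold a'; lra]. }
    assert (h2 : rpow b q * ib <= 1).
    { unfold ib. apply Rmult_le_reg_r with (rpow b' q); [apply rpow_gt0; lra|].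
      rewrite Rmult_assoc, Rinv_l by (apply Rgt_not_eq, rpow_gt0; lra). rewrite ?Rmult_1_l, ?Rmult_1_r.
      apply rpow_le; [lra| unfold b'; lra]. }
    assert (h3 : RA * mu * (rpow a q * ia) <= RA * mu) by (rewrite <- (Rmult_1_r (RA * mu)) at 2; apply Rmult_le_compat_l; nra).
    assert (h4 : RA * (1 - mu) * (rpow b q * ib) <= RA * (1 - mu)) by (rewrite <- (Rmult_1_r (RA * (1 - mu))) at 2; apply Rmult_le_compat_l; nra).
    replace (RA * mu * ia * rpow a q + RA * (1 - mu) * ib * rpow b q) with
      (RA * mu * (rpow a q * ia) + RA * (1 - mu) * (rpow b q * ib)) by ring.
    lra. }
  rewrite lq_Sq. replace ((a + b) / 2 + eps) with A by (unfold A, a', b'; field).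
  rewrite <- (rpow_inv_l A q) by lra. apply rpow_le.
  { apply Rinv_0_lt_compat; lra. }
  split; [apply Sq_nonneg| exact HS].
Qed.

Fixpoint mx (m : nat) (v : nat -> R) : R :=
  match m with O => 0 | S m' => Rmax (mx m' v) (Rabs (v m')) end.

Lemma mx_nonneg m v : 0 <= mx m v.
Proof. induction m; simpl; [lra|]. eapply Rle_trans; [exact IHm| apply Rmax_l]. Qed.

Lemma mx_ge m v i : (i < m)%nat -> Rabs (v i) <= mx m v.
Proof.
  induction m; intros Hi; [lia|]. simpl. destruct (Nat.eq_dec i m) as [->|Hne]; [apply Rmax_r|].
  eapply Rle_trans; [apply IHm; lia| apply Rmax_l].
Qed.

Lemma mx_le m v B : 0 <= B -> (forall i, (i < m)%nat -> Rabs (v i) <= B) -> mx m v <= B.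
Proof.
  induction m; intros HB H; simpl; [exact HB|]. apply Rmax_lub; [apply IHm; auto; intros; apply H; lia| apply H; lia].
Qed.

Lemma mx_scal m v s : 0 <= s -> mx m (fun i => s * v i) = s * mx m v.
Proof.
  intros Hs. induction m; simpl; [ring|]. rewrite IHm, Rabs_mult, (Rabs_right s) by lra. apply RmaxRmult; exact Hs.
Qed.

Lemma cont_mx p m b : (m <= p)%nat -> cont p (mx m) b.
Proof.
  induction m; intros Hm; simpl.
  - apply cont_const.
  - apply (cont_max p b (mx m) (fun b => Rabs (b m))); [apply IHm; lia|].
    apply (cont_abs p b (fun b => b m)), cont_coord; lia.
Qed.

Lemma g_facts n g : link_function n g ->
  g 0 = 0 /\ (forall x y, 0 <= x -> x < y -> g x < g y).
Proof. intros [H0 [_ [H2 _]]]. split; assumption. Qed.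

Lemma g_mono n g : link_function n g -> forall x y, 0 <= x -> x <= y -> g x <= g y.
Proof.
  intros Hg x y Hx Hxy. destruct (g_facts n g Hg) as [_ H]. destruct (Req_dec x y) as [->|Hne]; [lra|].
  left; apply H; lra.
Qed.

Lemma g_nonneg n g : link_function n g -> forall x, 0 <= x -> 0 <= g x.
Proof. intros Hg x Hx. destruct (g_facts n g Hg) as [H0 _]. rewrite <- H0. apply (g_mono n g Hg); lra. Qed.

Lemma sqnorm_nonneg m v : 0 <= sqnorm m v.
Proof. apply rsum_nonneg; intros; apply pow2_ge_0. Qed.

Lemma matvec_ext p A b b' : (forall i, (i < p)%nat -> b i = b' i) -> matvec p A b = matvec p A b'.
Proof. intros H. extensionality i. unfold matvec. apply rsum_ext. intros j Hj; rewrite H; auto. Qed.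

Lemma matvec_scal p A b s i : matvec p A (fun j => s * b j) i = s * matvec p A b i.
Proof. unfold matvec. rewrite <- rsum_scal. apply rsum_ext; intros; ring. Qed.

Lemma matvec_zero p A i : matvec p A (fun _ => 0) i = 0.
Proof. unfold matvec. rewrite (rsum_ext _ (fun _ => 0)) by (intros; ring). rewrite rsum_const; ring. Qed.

Definition Pen (p k : nat) (M : nat -> nat -> nat -> R) (q lam : nat -> R) (b : nat -> R) : R :=
  rsum (fun j => lam j * lqnorm p (q j) (matvec p (M j) b)) k.

Lemma objective_Pen n p k g Y X M q lam b :
  objective n p k g Y X M q lam b = g (sqnorm n (fun i => Y i - matvec p X b i)) + Pen p k M q lam b.
Proof. reflexivity. Qed.

Lemma Pen_nonneg p k M q lam b : pos_vec k lam -> 0 <= Pen p k M q lam b.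
Proof.
  intros Hl. apply rsum_nonneg. intros j Hj. apply Rmult_le_pos; [left; apply Hl; exact Hj| apply lq_nonneg].
Qed.

Lemma Pen_ext p k M q lam b b' : (forall i, (i < p)%nat -> b i = b' i) -> Pen p k M q lam b = Pen p k M q lam b'.
Proof. intros H. unfold Pen. apply rsum_ext. intros j _. rewrite (matvec_ext p (M j) b b' H). reflexivity. Qed.

Lemma Pen_homog p k M q lam b s : (forall j, (j < k)%nat -> 1 <= q j) -> 0 <= s ->
  Pen p k M q lam (fun i => s * b i) = s * Pen p k M q lam b.
Proof.
  intros Hq Hs. unfold Pen. rewrite <- rsum_scal. apply rsum_ext. intros j Hj.
  rewrite (lq_ext p (q j) _ (fun i => s * matvec p (M j) b i)) by (intros; apply matvec_scal).
  rewrite lq_homog by (try lra; specialize (Hq j Hj); lra). ring.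
Qed.

Lemma Pen_zero p k M q lam : (forall j, (j < k)%nat -> 1 <= q j) -> Pen p k M q lam (fun _ => 0) = 0.
Proof.
  intros Hq. unfold Pen. rewrite (rsum_ext _ (fun _ => 0)). { rewrite rsum_const; ring. }
  intros j Hj. rewrite lq_zero; [ring| specialize (Hq j Hj); lra| intros; apply matvec_zero].
Qed.

Lemma objective_dep n p k g Y X M q lam : dep_p p (objective n p k g Y X M q lam).
Proof.
  intros b b' H. rewrite !objective_Pen. rewrite (Pen_ext p k M q lam b b' H).
  rewrite (matvec_ext p X b b' H). reflexivity.
Qed.

Lemma objective_zero n p k g Y X M q lam : (forall j, (j < k)%nat -> 1 <= q j) ->
  objective n p k g Y X M q lam (fun _ => 0) = g (sqnorm n Y).
Proof.
  intros Hq. rewrite objective_Pen, Pen_zero by exact Hq. rewrite Rplus_0_r. f_equal.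
  unfold sqnorm. apply rsum_ext; intros. rewrite matvec_zero. f_equal; ring.
Qed.

Lemma cont_Pen p k M q lam b : (forall j, (j < k)%nat -> 1 <= q j) -> cont p (Pen p k M q lam) b.
Proof.
  intros Hq. unfold Pen. apply (cont_rsum p b (fun j b => lam j * lqnorm p (q j) (matvec p (M j) b))).
  intros j Hj. apply cont_scal. unfold lqnorm.
  apply (cont_rpow p b (/ q j) (fun b => rsum (fun i => rpow (Rabs (matvec p (M j) b i)) (q j)) p)).
  { apply Rinv_0_lt_compat. specialize (Hq j Hj); lra. }
  apply (cont_rsum p b (fun i b => rpow (Rabs (matvec p (M j) b i)) (q j))). intros i Hi.
  apply (cont_rpow p b (q j) (fun b => Rabs (matvec p (M j) b i))). { specialize (Hq j Hj); lra. }
  apply (cont_abs p b (fun b => matvec p (M j) b i)). apply cont_matvec; auto.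
Qed.

Lemma cont_objective n p k g Y X M q lam b : link_function n g -> (forall j, (j < k)%nat -> 1 <= q j) ->
  cont p (objective n p k g Y X M q lam) b.
Proof.
  intros Hg Hq. apply (cont_ext p b (fun b => g (sqnorm n (fun i => Y i - matvec p X b i)) + Pen p k M q lam b)).
  { intros; reflexivity. }
  apply cont_plus; [| apply cont_Pen; exact Hq].
  destruct Hg as [_ [Hgc _]].
  apply (cont_comp p b g (fun x => 0 <= x) (fun b => sqnorm n (fun i => Y i - matvec p X b i))).
  { intros; apply sqnorm_nonneg. }
  { unfold sqnorm. apply (cont_rsum p b (fun i b => (Y i - matvec p X b i) ^ 2)). intros i Hi.
    apply (cont_sq p b (fun b => Y i - matvec p X b i)). apply cont_minus; [apply cont_const| apply cont_matvec; auto]. }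
  intros e He. destruct (Hgc _ (sqnorm_nonneg n (fun i => Y i - matvec p X b i)) e He) as [a [Ha H]].
  exists a; split; [exact Ha|]. intros y Hy Hy'. apply H; assumption.
Qed.

(* positive lower bound of the penalty on the max-norm unit sphere *)
Lemma Pen_coercive p k M q lam : (forall j, (j < k)%nat -> 1 <= q j) -> pos_vec k lam ->
  (forall b : nat -> R,
     (forall j i, (j < k)%nat -> (i < p)%nat -> matvec p (M j) b i = 0) ->
     forall i, (i < p)%nat -> b i = 0) ->
  exists c0, 0 < c0 /\ forall b, c0 * mx p b <= Pen p k M q lam b.
Proof.
  intros Hq Hl Hker.
  set (J := fun b => Rmax (Pen p k M q lam b) (1 - mx p b)).
  assert (HJc : forall b, cont p J b).
  { intros b. apply cont_max; [apply cont_Pen; exact Hq|]. apply cont_minus; [apply cont_const| apply cont_mx; lia]. }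
  assert (HJd : dep_p p J).
  { intros b b' H. unfold J. rewrite (Pen_ext p k M q lam b b' H). f_equal. f_equal.
    clear J HJc. assert (forall m, (m <= p)%nat -> mx m b = mx m b'); [|apply H0; lia].
    induction m; intros Hm; simpl; [reflexivity|]. rewrite IHm, H by lia. reflexivity. }
  destruct (MC.box_min p 1 J ltac:(lra) HJc HJd) as [c [Hc Hmin]].
  assert (Hpos : 0 < J c).
  { unfold J. destruct (Rle_dec (Pen p k M q lam c) 0) as [h|h].
    2:{ eapply Rlt_le_trans; [| apply Rmax_l]. lra. }
    assert (HP0 : Pen p k M q lam c = 0) by (generalize (Pen_nonneg p k M q lam c Hl); lra).
    assert (Hc0 : forall i, (i < p)%nat -> c i = 0).
    { apply Hker. intros j i Hj Hi. apply (lq_zero_inv p (q j)); [| exact Hi].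
      assert (T : lam j * lqnorm p (q j) (matvec p (M j) c) <= Pen p k M q lam c).
      { unfold Pen. apply (rsum_term (fun j => lam j * lqnorm p (q j) (matvec p (M j) c))); [|exact Hj].
        intros j' Hj'. apply Rmult_le_pos; [left; apply Hl; exact Hj'| apply lq_nonneg]. }
      assert (Hlj := Hl j Hj). assert (Hn := lq_nonneg p (q j) (matvec p (M j) c)).
      rewrite HP0 in T. nra. }
    assert (mx p c = 0).
    { generalize (mx_nonneg p c); intros. assert (mx p c <= 0); [|lra].
      apply mx_le; [lra|]. intros i Hi. rewrite Hc0, Rabs_R0 by exact Hi. lra. }
    eapply Rlt_le_trans; [| apply Rmax_r]. lra. }
  exists (J c); split; [exact Hpos|]. intros b.
  set (s := mx p b). assert (Hs : 0 <= s) by apply mx_nonneg.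
  destruct (Req_dec s 0) as [Hs0|Hs0].
  { rewrite Hs0, Rmult_0_r. apply Pen_nonneg; exact Hl. }
  assert (Hs' : 0 < s) by lra.
  set (v := fun i => / s * b i).
  assert (Hv : forall i, (i < p)%nat -> Rabs (v i) <= 1).
  { intros i Hi. unfold v. rewrite Rabs_mult, Rabs_right by (left; apply Rinv_0_lt_compat; lra).
    apply Rmult_le_reg_l with s; [lra|]. rewrite <- Rmult_assoc, Rinv_r, Rmult_1_l, Rmult_1_r by lra.
    apply mx_ge; exact Hi. }
  assert (Hmv : mx p v = 1).
  { unfold v. rewrite mx_scal by (left; apply Rinv_0_lt_compat; lra). fold s. field. lra. }
  assert (HJv : J v = Pen p k M q lam v).
  { unfold J. rewrite Hmv. replace (1 - 1) with 0 by ring.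
    generalize (Pen_nonneg p k M q lam v Hl). unfold Rmax; destruct Rle_dec; lra. }
  assert (HPb : Pen p k M q lam b = s * Pen p k M q lam v).
  { unfold v. rewrite <- Pen_homog by (try exact Hq; lra). apply Pen_ext. intros i _. field. lra. }
  rewrite HPb. rewrite (Rmult_comm (J c)). apply Rmult_le_compat_l; [lra|].
  rewrite <- HJv. apply Hmin. exact Hv.
Qed.

Lemma exists_minimizer n p k g Y X M q lam : link_function n g ->
  (forall j, (j < k)%nat -> 1 <= q j) -> pos_vec k lam ->
  (forall b : nat -> R,
     (forall j i, (j < k)%nat -> (i < p)%nat -> matvec p (M j) b i = 0) ->
     forall i, (i < p)%nat -> b i = 0) ->
  exists b, is_minimizer n p k g Y X M q lam b.
Proof.
  intros Hg Hq Hl Hker.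
  destruct (Pen_coercive p k M q lam Hq Hl Hker) as [c0 [Hc0 Hco]].
  set (F := objective n p k g Y X M q lam).
  set (W := g (sqnorm n Y)).
  assert (HW : 0 <= W) by (apply (g_nonneg n g Hg), sqnorm_nonneg).
  set (B := (W + 1) / c0). assert (HB : 0 < B) by (apply Rdiv_lt_0_compat; lra).
  destruct (MC.box_min p B F ltac:(lra) (fun b => cont_objective n p k g Y X M q lam b Hg Hq)
              (objective_dep n p k g Y X M q lam)) as [c [Hc Hmin]].
  exists c. intros b'.
  destruct (classic (forall i, (i < p)%nat -> Rabs (b' i) <= B)) as [Hin|Hout].
  { apply Hmin; exact Hin. }
  apply not_all_ex_not in Hout. destruct Hout as [i Hi].
  apply imply_to_and in Hi. destruct Hi as [Hi Hbi]. apply Rnot_le_lt in Hbi.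
  assert (H0 : F c <= F (fun _ => 0)).
  { apply Hmin. intros; rewrite Rabs_R0; lra. }
  assert (HF0 : F (fun _ => 0) = W) by (apply objective_zero; exact Hq).
  assert (Hs : B < mx p b') by (eapply Rlt_le_trans; [exact Hbi| apply mx_ge; exact Hi]).
  assert (HPb : c0 * B < Pen p k M q lam b').
  { eapply Rlt_le_trans; [| apply Hco]. apply Rmult_lt_compat_l; assumption. }
  assert (Hc0B : c0 * B = W + 1) by (unfold B; field; lra).
  assert (Hgb : 0 <= g (sqnorm n (fun i => Y i - matvec p X b' i))) by (apply (g_nonneg n g Hg), sqnorm_nonneg).
  change (F c <= F b'). unfold F at 2. rewrite objective_Pen. fold F. lra.
Qed.

Definition convexf (phi : R -> R) : Prop :=
  forall x y t, 0 < t < 1 -> phi (t * x + (1 - t) * y) <= t * phi x + (1 - t) * phi y.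

Lemma convK phi a x b : convexf phi -> a <= x <= b -> (b - a) * phi x <= (b - x) * phi a + (x - a) * phi b.
Proof.
  intros Hc [Hax Hxb]. destruct (Req_dec x a) as [->|Ha]. { right; ring. }
  destruct (Req_dec x b) as [->|Hb]. { right; ring. }
  set (t := (b - x) / (b - a)).
  assert (Ht : 0 < t < 1).
  { unfold t. split; [apply Rdiv_lt_0_compat; lra|].
    apply (Rmult_lt_reg_r (b - a)); [lra|]. unfold Rdiv. rewrite Rmult_assoc, Rinv_l, Rmult_1_r by lra. lra. }
  assert (Ex : x = t * a + (1 - t) * b) by (unfold t; field; lra).
  assert (H := Hc a b t Ht). rewrite <- Ex in H.
  apply Rmult_le_compat_l with (r := b - a) in H; [|lra].
  replace ((b - a) * (t * phi a + (1 - t) * phi b)) with ((b - x) * phi a + (x - a) * phi b) in H by (unfold t; field; lra).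
  exact H.
Qed.

Definition Dg (phi : R -> R) (c t : R) : R := (phi t + phi c) / 2 - phi ((t + c) / 2).

Lemma D_mono_r phi c t1 t2 : convexf phi -> c <= t1 <= t2 -> Dg phi c t1 <= Dg phi c t2.
Proof.
  intros Hc [H1 H2]. destruct (Req_dec t1 t2) as [->|Hne]; [lra|].
  set (m1 := (t1 + c) / 2). set (m2 := (t2 + c) / 2).
  assert (K1 := convK phi m1 m2 t2 Hc ltac:(unfold m1, m2; lra)).
  assert (K2 := convK phi m1 t1 t2 Hc ltac:(unfold m1; lra)).
  unfold Dg. fold m1 m2.
  assert (HA : 0 < t2 - m1) by (unfold m1; lra).
  apply (Rmult_le_reg_l (t2 - m1)); [exact HA|].
  assert (E1 : 2 * (t2 - m2) + (t2 - t1) = 2 * (t2 - m1)) by (unfold m1, m2; field).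
  assert (E2 : 2 * (m2 - m1) + (t1 - m1) = t2 - m1) by (unfold m1, m2; field).
  nra.
Qed.

Lemma D_mono_l phi c t1 t2 : convexf phi -> t2 <= t1 <= c -> Dg phi c t1 <= Dg phi c t2.
Proof.
  intros Hc [H1 H2]. destruct (Req_dec t1 t2) as [->|Hne]; [lra|].
  set (m1 := (t1 + c) / 2). set (m2 := (t2 + c) / 2).
  assert (K1 := convK phi t2 m2 m1 Hc ltac:(unfold m1, m2; lra)).
  assert (K2 := convK phi t2 t1 m1 Hc ltac:(unfold m1; lra)).
  unfold Dg. fold m1 m2.
  assert (HA : 0 < m1 - t2) by (unfold m1; lra).
  apply (Rmult_le_reg_l (m1 - t2)); [exact HA|].
  assert (E1 : 2 * (m1 - m2) + (m1 - t1) = m1 - t2) by (unfold m1, m2; field).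
  assert (E2 : 2 * (m2 - t2) + (t1 - t2) = 2 * (m1 - t2)) by (unfold m1, m2; field).
  nra.
Qed.

Definition sconvexf (phi : R -> R) : Prop :=
  forall x y t, x <> y -> 0 < t < 1 -> phi (t * x + (1 - t) * y) < t * phi x + (1 - t) * phi y.

Lemma sconv_conv phi : sconvexf phi -> convexf phi.
Proof.
  intros H x y t Ht. destruct (Req_dec x y) as [->|Hne].
  - replace (t * y + (1 - t) * y) with y by ring. right; ring.
  - left; apply H; assumption.
Qed.

Lemma D_pos phi c t : sconvexf phi -> t <> c -> 0 < Dg phi c t.
Proof.
  intros H Hne. unfold Dg. assert (h := H t c (/2) Hne ltac:(lra)).
  replace (/ 2 * t + (1 - / 2) * c) with ((t + c) / 2) in h by field. lra.
Qed.

Lemma D_bound phi c : sconvexf phi -> forall eps, 0 < eps ->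
  exists eta, 0 < eta /\ forall t, Dg phi c t < eta -> Rabs (t - c) < eps.
Proof.
  intros Hs eps He. assert (Hc := sconv_conv phi Hs).
  assert (P1 := D_pos phi c (c + eps) Hs ltac:(lra)).
  assert (P2 := D_pos phi c (c - eps) Hs ltac:(lra)).
  exists (Rmin (Dg phi c (c + eps)) (Dg phi c (c - eps))). split; [apply Rmin_glb_lt; lra|].
  intros t Ht. destruct (Rlt_dec (Rabs (t - c)) eps) as [h|h]; [exact h|]. exfalso.
  apply Rnot_lt_le in h. destruct (Rle_dec c t) as [Hct|Hct].
  - rewrite Rabs_right in h by lra.
    assert (Dg phi c (c + eps) <= Dg phi c t) by (apply D_mono_r; [exact Hc| lra]).
    assert (Rmin (Dg phi c (c + eps)) (Dg phi c (c - eps)) <= Dg phi c (c + eps)) by apply Rmin_l. lra.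
  - rewrite Rabs_left in h by lra.
    assert (Dg phi c (c - eps) <= Dg phi c t) by (apply D_mono_l; [exact Hc| lra]).
    assert (Rmin (Dg phi c (c + eps)) (Dg phi c (c - eps)) <= Dg phi c (c - eps)) by apply Rmin_r. lra.
Qed.

Definition dot (m : nat) (a b : nat -> R) : R := rsum (fun i => a i * b i) m.

Lemma cs_sq m a b : (dot m a b) ^ 2 <= sqnorm m a * sqnorm m b.
Proof.
  induction m as [|m IH].
  { unfold dot, sqnorm; simpl; lra. }
  change (dot (S m) a b) with (dot m a b + a m * b m).
  change (sqnorm (S m) a) with (sqnorm m a + a m ^ 2).
  change (sqnorm (S m) b) with (sqnorm m b + b m ^ 2).
  set (S := dot m a b) in *. set (A := sqnorm m a) in *. set (B := sqnorm m b) in *.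
  assert (HA : 0 <= A) by (apply rsum_nonneg; intros; apply pow2_ge_0).
  assert (HB : 0 <= B) by (apply rsum_nonneg; intros; apply pow2_ge_0).
  set (x := a m) in *. set (y := b m) in *.
  assert (key : 2 * S * x * y <= A * y ^ 2 + B * x ^ 2).
  { assert (h1 : (2 * S * x * y) ^ 2 <= (A * y ^ 2 + B * x ^ 2) ^ 2).
    { replace ((A * y ^ 2 + B * x ^ 2) ^ 2) with ((A * y ^ 2 - B * x ^ 2) ^ 2 + 4 * x ^ 2 * y ^ 2 * (A * B)) by ring.
      replace ((2 * S * x * y) ^ 2) with (4 * x ^ 2 * y ^ 2 * S ^ 2) by ring.
      assert (h0 : 0 <= 4 * x ^ 2 * y ^ 2) by nra.
      assert (h3 : 4 * x ^ 2 * y ^ 2 * S ^ 2 <= 4 * x ^ 2 * y ^ 2 * (A * B)) by (apply Rmult_le_compat_l; assumption).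
      assert (0 <= (A * y ^ 2 - B * x ^ 2) ^ 2) by apply pow2_ge_0. lra. }
    assert (h2 : 0 <= A * y ^ 2 + B * x ^ 2) by nra.
    destruct (Rle_dec (2 * S * x * y) 0); [lra|].
    apply Rsqr_incr_0_var; [| exact h2]. unfold Rsqr. nra. }
  replace ((S + x * y) ^ 2) with (S ^ 2 + 2 * S * x * y + x ^ 2 * y ^ 2) by ring.
  replace ((A + x ^ 2) * (B + y ^ 2)) with (A * B + (A * y ^ 2 + B * x ^ 2) + x ^ 2 * y ^ 2) by ring.
  lra.
Qed.

Lemma cs m a b : dot m a b <= sqrt (sqnorm m a) * sqrt (sqnorm m b).
Proof.
  rewrite <- sqrt_mult by (apply rsum_nonneg; intros; apply pow2_ge_0).
  destruct (Rle_dec (dot m a b) 0) as [h|h].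
  { eapply Rle_trans; [exact h| apply sqrt_pos]. }
  rewrite <- (sqrt_pow2 (dot m a b)) by lra. apply sqrt_le_1_alt. apply cs_sq.
Qed.

Lemma sqnorm_nonneg' m v : 0 <= sqnorm m v.
Proof. apply rsum_nonneg; intros; apply pow2_ge_0. Qed.

Lemma sqnorm_mid m a b :
  sqnorm m (fun i => (a i + b i) / 2) <= ((sqrt (sqnorm m a) + sqrt (sqnorm m b)) / 2) ^ 2.
Proof.
  assert (E : sqnorm m (fun i => (a i + b i) / 2) = (sqnorm m a + sqnorm m b + 2 * dot m a b) / 4).
  { unfold sqnorm, dot.
    rewrite (rsum_ext _ (fun i => (/4 * a i ^ 2 + /4 * b i ^ 2) + /2 * (a i * b i))) by (intros; field).
    rewrite !rsum_plus, !rsum_scal. field. }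
  rewrite E. assert (H := cs m a b).
  assert (HA := sqnorm_nonneg' m a). assert (HB := sqnorm_nonneg' m b).
  rewrite <- (pow2_sqrt (sqnorm m a)) at 1 by exact HA.
  rewrite <- (pow2_sqrt (sqnorm m b)) at 1 by exact HB.
  replace (((sqrt (sqnorm m a) + sqrt (sqnorm m b)) / 2) ^ 2) with
    ((sqrt (sqnorm m a) ^ 2 + sqrt (sqnorm m b) ^ 2 + 2 * (sqrt (sqnorm m a) * sqrt (sqnorm m b))) / 4) by field.
  lra.
Qed.

Definition mid (b b0 : nat -> R) : nat -> R := fun i => (b i + b0 i) / 2.

Lemma matvec_mid p A b b0 i : matvec p A (mid b b0) i = (matvec p A b i + matvec p A b0 i) / 2.
Proof.
  unfold matvec. rewrite (rsum_ext _ (fun j => /2 * (A i j * b j) + /2 * (A i j * b0 j))) by (intros; unfold mid; field).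
  rewrite rsum_plus, !rsum_scal. field.
Qed.

Lemma Pen_mid p k M q lam b b0 : pos_vec k lam -> (forall j, (j < k)%nat -> 1 <= q j) ->
  Pen p k M q lam (mid b b0) <= (Pen p k M q lam b + Pen p k M q lam b0) / 2.
Proof.
  intros Hl Hq. unfold Pen.
  replace ((rsum (fun j => lam j * lqnorm p (q j) (matvec p (M j) b)) k +
            rsum (fun j => lam j * lqnorm p (q j) (matvec p (M j) b0)) k) / 2) with
   (rsum (fun j => / 2 * (lam j * lqnorm p (q j) (matvec p (M j) b) + lam j * lqnorm p (q j) (matvec p (M j) b0))) k)
   by (rewrite rsum_scal, rsum_plus; field).
  apply rsum_le. intros j Hj.
  assert (H : lqnorm p (q j) (matvec p (M j) (mid b b0)) <=
     (lqnorm p (q j) (matvec p (M j) b) + lqnorm p (q j) (matvec p (M j) b0)) / 2).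
  { apply lq_mid; [apply Hq; exact Hj|]. intros i Hi. rewrite matvec_mid.
    unfold Rdiv. rewrite Rabs_mult, (Rabs_right (/2)) by lra.
    apply Rmult_le_compat_r; [lra| apply Rabs_triang]. }
  assert (Hlj := Hl j Hj).
  apply Rmult_le_compat_l with (r := lam j) in H; [|lra]. lra.
Qed.

Definition res n p Y X b := sqnorm n (fun i => Y i - matvec p X b i).

Lemma core n p k g Y X M q lam lam0 b b0 :
  (forall j, (j < k)%nat -> 1 <= q j) -> pos_vec k lam -> pos_vec k lam0 ->
  is_minimizer n p k g Y X M q lam b -> is_minimizer n p k g Y X M q lam0 b0 ->
  (g (res n p Y X b) + g (res n p Y X b0)) / 2 - g (res n p Y X (mid b b0)) <=
  (Pen p k M q lam0 b - Pen p k M q lam0 b0 - (Pen p k M q lam b - Pen p k M q lam b0)) / 4.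
Proof.
  intros Hq Hl Hl0 Hb Hb0.
  assert (H1 := Hb (mid b b0)). assert (H2 := Hb0 (mid b b0)).
  rewrite !objective_Pen in H1, H2.
  assert (P1 := Pen_mid p k M q lam b b0 Hl Hq).
  assert (P2 := Pen_mid p k M q lam0 b b0 Hl0 Hq).
  unfold res. lra.
Qed.

Lemma gap_lower n p g Y X b b0 : link_function n g ->
  Dg (fun x => g (x ^ 2)) (sqrt (res n p Y X b0)) (sqrt (res n p Y X b)) <=
  (g (res n p Y X b) + g (res n p Y X b0)) / 2 - g (res n p Y X (mid b b0)).
Proof.
  intros Hg. unfold Dg.
  assert (N1 := sqnorm_nonneg' n (fun i => Y i - matvec p X b i)).
  assert (N2 := sqnorm_nonneg' n (fun i => Y i - matvec p X b0 i)).
  unfold res. rewrite !pow2_sqrt by assumption.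
  assert (E : sqnorm n (fun i => Y i - matvec p X (mid b b0) i) =
     sqnorm n (fun i => ((Y i - matvec p X b i) + (Y i - matvec p X b0 i)) / 2)).
  { unfold sqnorm. apply rsum_ext. intros i _. rewrite matvec_mid. f_equal. field. }
  assert (H := sqnorm_mid n (fun i => Y i - matvec p X b i) (fun i => Y i - matvec p X b0 i)).
  cbv beta in H. rewrite <- E in H.
  assert (G := g_mono n g Hg _ _ (sqnorm_nonneg' _ _) H). lra.
Qed.

Definition e0 (x : R) : nat -> R := fun i => if Nat.eqb i 0 then x else 0.

Lemma sq_e0 n x : (1 <= n)%nat -> sqnorm n (e0 x) = x ^ 2.
Proof.
  induction n as [|n IH]; intros Hn; [lia|].
  change (sqnorm (S n) (e0 x)) with (sqnorm n (e0 x) + e0 x n ^ 2).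
  destruct n as [|n'].
  - unfold sqnorm, e0. cbn [rsum Nat.eqb]. ring.
  - rewrite IH by lia. unfold e0. cbn [Nat.eqb]. ring.
Qed.

Lemma phi_sconv n g : (1 <= n)%nat -> link_function n g -> sconvexf (fun x => g (x ^ 2)).
Proof.
  intros Hn Hg x y t Hxy Ht. destruct Hg as [_ [_ [_ [_ H5]]]].
  assert (Hex : exists i, (i < n)%nat /\ e0 x i <> e0 y i) by (exists 0%nat; split; [lia| exact Hxy]).
  assert (H := H5 (e0 x) (e0 y) t Hex Ht).
  rewrite !sq_e0 in H by exact Hn.
  rewrite <- sq_e0 with (n := n) by exact Hn.
  replace (sqnorm n (e0 (t * x + (1 - t) * y))) with (sqnorm n (fun i => t * e0 x i + (1 - t) * e0 y i)).
  { exact H. }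
  unfold sqnorm. apply rsum_ext. intros i _. unfold e0. destruct (Nat.eqb i 0); ring.
Qed.

Lemma lower_bound k (f : nat -> R) : (forall j, (j < k)%nat -> 0 < f j) ->
  exists L, 0 < L /\ forall j, (j < k)%nat -> L <= f j.
Proof.
  induction k as [|k IH]; intros H.
  - exists 1; split; [lra| intros; lia].
  - destruct IH as [L [HL HLj]]; [intros; apply H; lia|].
    exists (Rmin L (f k)). split; [apply Rmin_glb_lt; [lra| apply H; lia]|].
    intros j Hj. destruct (Nat.eq_dec j k) as [->|Hne]; [apply Rmin_r|].
    eapply Rle_trans; [apply Rmin_l| apply HLj; lia].
Qed.

Lemma edist_ge k l l0 j : (j < k)%nat -> Rabs (l j - l0 j) <= edist k l l0.
Proof.
  intros Hj. unfold edist. rewrite <- sqrt_pow2 with (x := Rabs (l j - l0 j)) by apply Rabs_pos.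
  apply sqrt_le_1_alt. rewrite pow2_abs.
  apply (rsum_term (fun i => (l i - l0 i) ^ 2)); [intros; apply pow2_ge_0| exact Hj].
Qed.

Lemma min_bounds n p k g Y X M q lam b : link_function n g -> (forall j, (j < k)%nat -> 1 <= q j) ->
  pos_vec k lam -> is_minimizer n p k g Y X M q lam b ->
  Pen p k M q lam b <= g (sqnorm n Y) /\ res n p Y X b <= sqnorm n Y.
Proof.
  intros Hg Hq Hl Hb. assert (H := Hb (fun _ => 0)). rewrite objective_zero in H by exact Hq.
  rewrite objective_Pen in H. fold (res n p Y X b) in H.
  assert (G := g_nonneg n g Hg _ (sqnorm_nonneg' n (fun i => Y i - matvec p X b i))). fold (res n p Y X b) in G.
  assert (P := Pen_nonneg p k M q lam b Hl).
  split; [lra|]. destruct (Rle_dec (res n p Y X b) (sqnorm n Y)) as [h|h]; [exact h|].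
  destruct (g_facts n g Hg) as [_ Hinc].
  assert (g (sqnorm n Y) < g (res n p Y X b)) by (apply Hinc; [apply sqnorm_nonneg'| lra]). lra.
Qed.

Lemma pj_bound p k M q lam b j W L : pos_vec k lam -> (j < k)%nat -> 0 < L -> L <= lam j ->
  Pen p k M q lam b <= W -> lqnorm p (q j) (matvec p (M j) b) <= W / L.
Proof.
  intros Hl Hj HL HLj HP.
  assert (T : lam j * lqnorm p (q j) (matvec p (M j) b) <= Pen p k M q lam b).
  { unfold Pen. apply (rsum_term (fun j => lam j * lqnorm p (q j) (matvec p (M j) b))); [|exact Hj].
    intros j' Hj'. apply Rmult_le_pos; [left; apply Hl; exact Hj'| apply lq_nonneg]. }
  assert (N := lq_nonneg p (q j) (matvec p (M j) b)).
  apply (Rmult_le_reg_l L); [exact HL|]. unfold Rdiv. rewrite <- Rmult_assoc, (Rmult_comm L W), Rmult_assoc, Rinv_r, Rmult_1_r by lra.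
  nra.
Qed.

Lemma rsum_diff (l0 l u v : nat -> R) k :
  rsum (fun j => (l0 j - l j) * (u j - v j)) k =
  rsum (fun j => l0 j * u j) k - rsum (fun j => l0 j * v j) k -
  (rsum (fun j => l j * u j) k - rsum (fun j => l j * v j) k).
Proof. induction k as [|k IH]; simpl; [ring|]. rewrite IH. ring. Qed.

Theorem lemma3 (n p k : nat) (Y : nat -> R) (X : nat -> nat -> R) (g : R -> R)
  (M : nat -> nat -> nat -> R) (q : nat -> R)
  (Hg : link_function n g)
  (Hq : forall j, (j < k)%nat -> 1 <= q j)
  (Hker : forall b : nat -> R,
     (forall j i, (j < k)%nat -> (i < p)%nat -> matvec p (M j) b i = 0) ->
     forall i, (i < p)%nat -> b i = 0) :
  (* the minimizer set is nonempty *)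
  (forall lam, pos_vec k lam -> exists b, is_minimizer n p k g Y X M q lam b)
  (* the residual norm (hence also its image under g) does not depend on the minimizer *)
  /\ (forall lam b1 b2, pos_vec k lam ->
        is_minimizer n p k g Y X M q lam b1 -> is_minimizer n p k g Y X M q lam b2 ->
        sqnorm n (fun i => Y i - matvec p X b1 i) = sqnorm n (fun i => Y i - matvec p X b2 i)
        /\ g (sqnorm n (fun i => Y i - matvec p X b1 i))
           = g (sqnorm n (fun i => Y i - matvec p X b2 i)))
  (* continuity in lam on (0,oo)^k w.r.t. the Euclidean norm *)
  /\ (forall lam0 b0, pos_vec k lam0 -> is_minimizer n p k g Y X M q lam0 b0 ->
        forall eps, 0 < eps -> exists delta, 0 < delta /\
          forall lam b, pos_vec k lam -> edist k lam lam0 < delta ->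
            is_minimizer n p k g Y X M q lam b ->
            Rabs (g (sqnorm n (fun i => Y i - matvec p X b i))
                  - g (sqnorm n (fun i => Y i - matvec p X b0 i))) < eps
            /\ Rabs (sqnorm n (fun i => Y i - matvec p X b i)
                     - sqnorm n (fun i => Y i - matvec p X b0 i)) < eps).
Proof.
  split; [intros lam Hl; apply exists_minimizer; assumption|].
  split.
  - intros lam b1 b2 Hl H1 H2.
    assert (Hres : res n p Y X b1 = res n p Y X b2).
    { destruct (Nat.eq_dec n 0) as [Hn0|Hn0].
      { subst n. reflexivity. }
      assert (C := core n p k g Y X M q lam lam b1 b2 Hq Hl Hl H1 H2).
      replace ((Pen p k M q lam b1 - Pen p k M q lam b2 - (Pen p k M q lam b1 - Pen p k M q lam b2)) / 4) with 0 in C by field.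
      assert (Gl := gap_lower n p g Y X b1 b2 Hg).
      destruct (Req_dec (sqrt (res n p Y X b1)) (sqrt (res n p Y X b2))) as [E|E].
      { rewrite <- (pow2_sqrt (res n p Y X b1)), <- (pow2_sqrt (res n p Y X b2)) by apply sqnorm_nonneg'.
        rewrite E; reflexivity. }
      assert (P := D_pos (fun x => g (x ^ 2)) _ _ (phi_sconv n g ltac:(lia) Hg) E). lra. }
    unfold res in Hres. split; [exact Hres| rewrite Hres; reflexivity].
  - intros lam0 b0 Hl0 Hb0 eps Heps.
    destruct (Nat.eq_dec n 0) as [Hn0|Hn0].
    { subst n. exists 1; split; [lra|]. intros. unfold sqnorm. cbn [rsum].
      rewrite !Rminus_diag, Rabs_R0. lra. }
    assert (Hgc := proj1 (proj2 Hg)).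
    set (r0 := res n p Y X b0).
    destruct (Hgc r0 (sqnorm_nonneg' _ _) eps Heps) as [ag [Hag Hgr]].
    set (e2 := Rmin eps ag). assert (He2 : 0 < e2) by (apply Rmin_glb_lt; lra).
    set (W := g (sqnorm n Y)). assert (HW : 0 <= W) by (apply (g_nonneg n g Hg), sqnorm_nonneg').
    set (T0 := sqrt (sqnorm n Y)). assert (HT0 : 0 <= T0) by apply sqrt_pos.
    set (e1 := e2 / (2 * T0 + 1)). assert (He1 : 0 < e1) by (apply Rdiv_lt_0_compat; lra).
    set (c := sqrt r0).
    destruct (D_bound (fun x => g (x ^ 2)) c (phi_sconv n g ltac:(lia) Hg) e1 He1) as [eta [Heta HD]].
    destruct (lower_bound k lam0 Hl0) as [L [HL HLj]].
    assert (H3W : 0 <= 3 * W / L) by (apply Rmult_le_pos; [lra| left; apply Rinv_0_lt_compat; lra]).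
    set (Cst := INR k * (3 * W / L) + 1).
    assert (HCst : 0 < Cst) by (unfold Cst; generalize (pos_INR k); intros; nra).
    exists (Rmin (L / 2) (eta / Cst)). split.
    { apply Rmin_glb_lt; [lra| apply Rdiv_lt_0_compat; lra]. }
    intros lam b Hl Hd Hb.
    set (d := edist k lam lam0) in *.
    assert (Hd0 : 0 <= d) by apply sqrt_pos.
    assert (Hd1 : d < L / 2) by (eapply Rlt_le_trans; [exact Hd| apply Rmin_l]).
    assert (Hd2 : d < eta / Cst) by (eapply Rlt_le_trans; [exact Hd| apply Rmin_r]).
    destruct (min_bounds n p k g Y X M q lam b Hg Hq Hl Hb) as [PB RB].
    destruct (min_bounds n p k g Y X M q lam0 b0 Hg Hq Hl0 Hb0) as [PB0 RB0].
    fold W in PB, PB0.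
    assert (Hterm : forall j, (j < k)%nat ->
       (lam0 j - lam j) * (lqnorm p (q j) (matvec p (M j) b) - lqnorm p (q j) (matvec p (M j) b0)) <= d * (3 * W / L)).
    { intros j Hj.
      assert (Hdj := edist_ge k lam lam0 j Hj). fold d in Hdj.
      assert (HL0 := HLj j Hj).
      assert (Hlam : L / 2 <= lam j).
      { generalize (Rle_abs (lam0 j - lam j)). rewrite Rabs_minus_sym. lra. }
      assert (B1 := pj_bound p k M q lam b j W (L / 2) Hl Hj ltac:(lra) Hlam PB).
      assert (B2 := pj_bound p k M q lam0 b0 j W L Hl0 Hj HL HL0 PB0).
      set (u := lqnorm p (q j) (matvec p (M j) b)) in *.
      set (v := lqnorm p (q j) (matvec p (M j) b0)) in *.
      assert (Hu : 0 <= u) by apply lq_nonneg. assert (Hv : 0 <= v) by apply lq_nonneg.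
      assert (Huv : Rabs (u - v) <= u + v) by (unfold Rabs; destruct Rcase_abs; lra).
      replace (W / (L / 2)) with (2 * W / L) in B1 by (field; lra).
      assert (Hsum : u + v <= 3 * W / L).
      { replace (3 * W / L) with (2 * W / L + W / L) by (field; lra). lra. }
      eapply Rle_trans; [apply Rle_abs|]. rewrite Rabs_mult, Rabs_minus_sym.
      apply Rmult_le_compat; [apply Rabs_pos| apply Rabs_pos| exact Hdj| lra]. }
    assert (Hrs : rsum (fun j => (lam0 j - lam j) * (lqnorm p (q j) (matvec p (M j) b) - lqnorm p (q j) (matvec p (M j) b0))) k
                  <= INR k * (d * (3 * W / L))).
    { rewrite <- rsum_const. apply rsum_le. exact Hterm. }
    assert (C := core n p k g Y X M q lam lam0 b b0 Hq Hl Hl0 Hb Hb0).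
    assert (Ediff : Pen p k M q lam0 b - Pen p k M q lam0 b0 - (Pen p k M q lam b - Pen p k M q lam b0) =
       rsum (fun j => (lam0 j - lam j) * (lqnorm p (q j) (matvec p (M j) b) - lqnorm p (q j) (matvec p (M j) b0))) k).
    { unfold Pen. exact (eq_sym (rsum_diff lam0 lam (fun j => lqnorm p (q j) (matvec p (M j) b))
                                          (fun j => lqnorm p (q j) (matvec p (M j) b0)) k)). }
    rewrite Ediff in C. fold r0 in C.
    assert (Gl := gap_lower n p g Y X b b0 Hg). fold r0 c in Gl.
    set (t := sqrt (res n p Y X b)) in *.
    set (Xb := INR k * (d * (3 * W / L))) in *.
    assert (HX : 0 <= Xb) by (unfold Xb; apply Rmult_le_pos; [apply pos_INR| apply Rmult_le_pos; lra]).
    assert (HXC : Xb + d = d * Cst) by (unfold Xb, Cst; ring).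
    assert (HdC : d * Cst < eta).
    { apply Rmult_lt_compat_r with (r := Cst) in Hd2; [|exact HCst].
      replace (eta / Cst * Cst) with eta in Hd2 by (field; lra). exact Hd2. }
    assert (HDt : Dg (fun x => g (x ^ 2)) c t < eta).
    { destruct (Rle_dec 0 (rsum (fun j => (lam0 j - lam j) * (lqnorm p (q j) (matvec p (M j) b) - lqnorm p (q j) (matvec p (M j) b0))) k)); lra. }
    assert (Htc := HD t HDt).
    assert (Ht0 : 0 <= t) by apply sqrt_pos. assert (Hc0 : 0 <= c) by apply sqrt_pos.
    assert (HtT : t <= T0) by (apply sqrt_le_1_alt; exact RB).
    assert (HcT : c <= T0) by (apply sqrt_le_1_alt; exact RB0).
    assert (Hrr : Rabs (res n p Y X b - r0) < e2).
    { rewrite <- (pow2_sqrt (res n p Y X b)) by apply sqnorm_nonneg'.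
      rewrite <- (pow2_sqrt r0) by apply sqnorm_nonneg'. fold t c.
      replace (t ^ 2 - c ^ 2) with ((t - c) * (t + c)) by ring.
      rewrite Rabs_mult, (Rabs_right (t + c)) by lra.
      apply Rle_lt_trans with (e1 * (2 * T0)).
      { apply Rmult_le_compat; [apply Rabs_pos| lra| lra| lra]. }
      unfold e1. apply Rmult_lt_reg_r with (2 * T0 + 1); [lra|].
      replace (e2 / (2 * T0 + 1) * (2 * T0) * (2 * T0 + 1)) with (e2 * (2 * T0)) by (field; lra).
      nra. }
    assert (He2a : e2 <= eps) by apply Rmin_l. assert (He2b : e2 <= ag) by apply Rmin_r.
    change (sqnorm n (fun i => Y i - matvec p X b i)) with (res n p Y X b).
    change (sqnorm n (fun i => Y i - matvec p X b0 i)) with r0.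
    split; [| lra].
    apply Hgr; [apply sqnorm_nonneg'| lra].
Qed.
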